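(* Let $k$ be a finite extension of $\mathbb{Q}_p$ and $L$ a finite-dimensional solvable Lie algebra over $k$ which is CA. Then $L$ is either abelian, or metabelian of the form $C\ltimes N$, where $N$ and $C$ are abelian, $\dim C\leq\dim N$, and $C$ acts fixed-point-freely on $N$.
   Context: A Lie algebra is CA if the centralizer of each of its nonzero elements is abelian. $C$ acts fixed-point-freely on $N$ if for $c\in C$, $n\in N$, $[c,n]=0$ implies $c=0$ or $n=0$. *)

(* Defs.v *)
From HB Require Import structures.
From mathcomp Require Import all_boot all_order all_algebra.
From mathcomp Require Import reals.
Set Implicit Arguments. Unset Strict Implicit. Unset Printing Implicit Defensive.
Import Order.TTheory GRing.Theory Num.Theory.
Local Open Scope ring_scope.

(* The p-adic absolute value on Q: |q|_p = p^(-v_p(q)), |0|_p = 0. *)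
Definition padic_abs (R : realType) (p : nat) (q : rat) : R :=
  if q == 0 then 0
  else (p%:R ^+ logn p `|denq q|%N) / (p%:R ^+ logn p `|numq q|%N).

Definition is_absval (R : realType) (k : fieldType) (abs : k -> R) : Prop :=
  [/\ forall x, 0 <= abs x,
      forall x, abs x = 0 <-> x = 0,
      forall x y, abs (x * y) = abs x * abs y
    & forall x y, abs (x + y) <= abs x + abs y].

Definition abs_cauchy (R : realType) (k : fieldType) (abs : k -> R)
    (u : nat -> k) : Prop :=
  forall e : R, 0 < e -> exists N : nat, forall m n : nat,
    (N <= m)%N -> (N <= n)%N -> abs (u m - u n) < e.

Definition abs_converges (R : realType) (k : fieldType) (abs : k -> R)
    (u : nat -> k) (x : k) : Prop :=
  forall e : R, 0 < e -> exists N : nat, forall n : nat,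
    (N <= n)%N -> abs (u n - x) < e.

(* x lies in the closure of the prime field Q inside k; when k is complete
   and abs restricts to |.|_p on Q, this closure is (a copy of) Q_p. *)
Definition in_Qp_closure (R : realType) (k : fieldType) (abs : k -> R)
    (x : k) : Prop :=
  exists u : nat -> rat, abs_converges abs (fun n => ratr (u n)) x.

Definition finite_ext_Qp (R : realType) (p : nat) (k : fieldType)
    (abs : k -> R) : Prop :=
  [/\ prime p,
      is_absval abs,
      forall q : rat, abs (ratr q) = padic_abs R p q,
      forall u : nat -> k, abs_cauchy abs u -> exists x, abs_converges abs u x
    & exists (n : nat) (e : 'I_n -> k), forall x : k,
        exists c : 'I_n -> k, (forall i, in_Qp_closure abs (c i)) /\
          x = \sum_(i < n) c i * e i].

Definition lie_bracket (k : fieldType) (V : lmodType k) (br : V -> V -> V)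
  : Prop :=
  [/\ forall (a : k) x y z, br (a *: x + y) z = a *: br x z + br y z,
      forall (a : k) x y z, br z (a *: x + y) = a *: br z x + br z y,
      forall x, br x x = 0
    & forall x y z, br x (br y z) + br y (br z x) + br z (br x y) = 0].



(* [U, W] : the subspace spanned by the brackets [u, w], u in U, w in W. *)
Definition lie_brv (k : fieldType) (V : vectType k) (br : V -> V -> V)
    (U W : {vspace V}) : {vspace V} :=
  (\sum_(i < \dim U) \sum_(j < \dim W)
     <[br (vbasis U)`_i (vbasis W)`_j]>)%VS.

Fixpoint derived_series (k : fieldType) (V : vectType k) (br : V -> V -> V)
    (n : nat) : {vspace V} :=
  match n with
  | 0 => fullv
  | m.+1 => lie_brv br (derived_series br m) (derived_series br m)
  end.

Definition lie_solvable (k : fieldType) (V : vectType k) (br : V -> V -> V)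
  : Prop := exists n, derived_series br n = 0%VS.

Definition lie_abelian (k : fieldType) (V : lmodType k) (br : V -> V -> V)
  : Prop := forall x y, br x y = 0.

(* CA: the centralizer of every nonzero element is abelian. *)
Definition lie_CA (k : fieldType) (V : lmodType k) (br : V -> V -> V)
  : Prop :=
  forall x, x != 0 -> forall y z, br x y = 0 -> br x z = 0 -> br y z = 0.

Definition lie_metabelian (k : fieldType) (V : vectType k) (br : V -> V -> V)
  : Prop :=
  forall x y, x \in lie_brv br fullv fullv -> y \in lie_brv br fullv fullv ->
    br x y = 0.

Definition semidirect_CN (k : fieldType) (V : vectType k) (br : V -> V -> V)
    (C N : {vspace V}) : Prop :=
  [/\ (C + N)%VS = fullv, (C :&: N)%VS = 0%VS,
      (forall x y, y \in N -> br x y \in N)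
    & (forall x y, x \in C -> y \in C -> br x y \in C)] /\
  [/\
      (forall x y, x \in C -> y \in C -> br x y = 0),
      (forall x y, x \in N -> y \in N -> br x y = 0),
      (\dim C <= \dim N)%N
    & (forall c n, c \in C -> n \in N -> br c n = 0 -> c = 0 \/ n = 0)].

(* Main.v *)
Require Import Defs.
From HB Require Import structures.
From mathcomp Require Import all_boot all_order all_algebra.
From mathcomp Require Import reals.
From mathcomp Require Import zify.
From Stdlib Require Import Classical_Prop.
Local Open Scope ring_scope.
Set Implicit Arguments. Unset Strict Implicit.
Import GRing.Theory Num.Theory.
Local Open Scope ring_scope.

Lemma weyl_det (k : fieldType) n (P Q Y : 'M[k]_n.+1) :
  Q = P * Y - Y * P -> P * Q = Q * P -> (n.+1)%:R != 0 :> k -> \det Q = 0.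
Proof.
move=> hQ hPQ hn.
have tr0 i : \tr (Q ^+ i.+1) = 0.
  have cPQi : GRing.comm P (Q ^+ i) by apply: commrX.
  rewrite exprSr {2}hQ mulrBr linearB /=.
  rewrite mulrA -cPQi -mulrA -!mulmxE mxtrace_mulC !mulmxE mulrA.
  by rewrite subrr.
have := congr1 mxtrace (Cayley_Hamilton Q).
rewrite -[char_poly Q]coefK poly_def rmorph_sum /= mxtrace0.
rewrite (eq_bigr (fun i : 'I_(size (char_poly Q)) => (char_poly Q)`_i *: Q ^+ i)); last first.
  by move=> i _; rewrite horner_mxZ rmorphXn /= horner_mx_X.
rewrite raddf_sum /= size_char_poly big_ord_recl /=.
rewrite big1; last by move=> i _; rewrite linearZ /= tr0; rewrite ?scaler0 ?mulr0.
rewrite addr0 expr0 linearZ /= mxtrace1 char_poly_det => /eqP.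
rewrite mulf_eq0 (negPf hn) orbF mulf_eq0 signr_eq0 /=.
by move/eqP.
Qed.

Lemma weyl_det' (k : fieldType) m (P Q Y : 'M[k]_m) : (0 < m)%N ->
  Q = P *m Y - Y *m P -> P *m Q = Q *m P -> m%:R != 0 :> k -> \det Q = 0.
Proof. case: m P Q Y => // m P Q Y _; rewrite !mulmxE; exact: weyl_det. Qed.

Section Lie.
Variables (k : fieldType) (L : vectType k) (br : L -> L -> L).
Hypothesis hL : lie_bracket br.

Lemma br_linr x : linear (br x).
Proof. by case: hL => _ h _ _ a u v; rewrite h. Qed.
Lemma br_linl z : linear (br^~ z).
Proof. by case: hL => h _ _ _ a u v; rewrite /= h. Qed.

Definition adl x : {linear L -> L} :=
  HB.pack (br x) (GRing.isLinear.Build k L L *:%R (br x) (br_linr x)).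
Definition adr z : {linear L -> L} :=
  HB.pack (br^~ z) (GRing.isLinear.Build k L L *:%R (br^~ z) (br_linl z)).

Lemma brr0 x : br x 0 = 0. Proof. exact: (linear0 (adl x)). Qed.
Lemma brl0 x : br 0 x = 0. Proof. exact: (linear0 (adr x)). Qed.
Lemma brrD x u v : br x (u + v) = br x u + br x v. Proof. exact: (linearD (adl x)). Qed.
Lemma brlD x u v : br (u + v) x = br u x + br v x. Proof. exact: (linearD (adr x)). Qed.
Lemma brrN x u : br x (- u) = - br x u. Proof. exact: (linearN (adl x)). Qed.
Lemma brlN x u : br (- u) x = - br u x. Proof. exact: (linearN (adr x)). Qed.
Lemma brrB x u v : br x (u - v) = br x u - br x v. Proof. exact: (linearB (adl x)). Qed.
Lemma brlB x u v : br (u - v) x = br u x - br v x. Proof. exact: (linearB (adr x)). Qed.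
Lemma brrZ x a u : br x (a *: u) = a *: br x u.
Proof. by rewrite -[a *: u]addr0 br_linr brr0 addr0. Qed.
Lemma brlZ x a u : br (a *: u) x = a *: br u x.
Proof. by rewrite -[a *: u]addr0 (br_linl x) brl0 addr0. Qed.
Lemma brr_sum x (I : Type) (r : seq I) (P : pred I) (F : I -> L) :
  br x (\sum_(i <- r | P i) F i) = \sum_(i <- r | P i) br x (F i).
Proof. exact: (linear_sum (adl x)). Qed.
Lemma brl_sum x (I : Type) (r : seq I) (P : pred I) (F : I -> L) :
  br (\sum_(i <- r | P i) F i) x = \sum_(i <- r | P i) br (F i) x.
Proof. exact: (linear_sum (adr x)). Qed.

Lemma brxx x : br x x = 0. Proof. by case: hL. Qed.

Lemma br_anti x y : br x y = - br y x.
Proof.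
have := brxx (x + y); rewrite brlD !brrD !brxx add0r addr0 => /eqP.
by rewrite addr_eq0 => /eqP.
Qed.

Lemma jacobi x y z : br x (br y z) = br (br x y) z + br y (br x z).
Proof.
case: hL => _ _ _ /(_ x y z) J.
rewrite (br_anti z x) brrN (br_anti z (br x y)) in J.
apply/eqP; rewrite -subr_eq0 -J; apply/eqP.
by rewrite opprD addrA addrAC.
Qed.

Lemma vbasis_in (U : {vspace L}) (i : 'I_(\dim U)) : (vbasis U)`_i \in U.
Proof. by apply: vbasis_mem; apply: mem_nth; rewrite size_tuple. Qed.

Lemma mem_brv (U W : {vspace L}) u w :
  u \in U -> w \in W -> br u w \in lie_brv br U W.
Proof.
move=> Hu Hw; rewrite (coord_vbasis Hu) (coord_vbasis Hw) brl_sum.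
apply: memv_suml => i _; rewrite brlZ brr_sum; apply: memvZ.
apply: memv_suml => j _; rewrite brrZ; apply: memvZ.
rewrite memvE /lie_brv; apply: (sumv_sup i) => //.
by apply: (sumv_sup j) => //; apply: subvv.
Qed.

Lemma brv_sub (U W V : {vspace L}) :
  (forall (i : 'I_(\dim U)) (j : 'I_(\dim W)), br (vbasis U)`_i (vbasis W)`_j \in V) ->
  (lie_brv br U W <= V)%VS.
Proof.
move=> H; apply/subv_sumP => i _; apply/subv_sumP => j _.
by rewrite -memvE.
Qed.

Lemma derived_ideal i x y :
  y \in derived_series br i -> br x y \in derived_series br i.
Proof.
elim: i x y => [|i IH] x y; first by move=> _; apply: memvf.
move=> Hy; rewrite -[br x y](lfunE (adl x)) memv_preim; move: y Hy; apply/subvP.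
apply: brv_sub => a b; rewrite -memv_preim lfunE /= jacobi.
apply: memvD; apply: mem_brv; rewrite ?IH //; try exact: vbasis_in.
all: try (apply: IH; exact: vbasis_in).
Qed.


Section Jac.
Variable N : {vspace L}.
Hypotheses (hNab : forall u v, u \in N -> v \in N -> br u v = 0)
  (hNid : forall x v, v \in N -> br x v \in N)
  (hself : forall x v, v \in N -> v != 0 -> br x v = 0 -> x \in N)
  (hdim : (0 < \dim N)%N) (hchar : (\dim N)%:R != 0 :> k).

Definition rv v : 'rV[k]_(\dim N) := \row_j coord (vbasis N) j v.
Definition mx x : 'M[k]_(\dim N) :=
  \matrix_(i, j) coord (vbasis N) j (br x (vbasis N)`_i).

Lemma rv_mx x v : v \in N -> rv (br x v) = rv v *m mx x.
Proof.
move=> Hv; apply/rowP => j; rewrite mxE [RHS]mxE.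
rewrite {1}(coord_vbasis Hv) brr_sum linear_sum.
by apply: eq_bigr => i _; rewrite brrZ linearZ /= !mxE.
Qed.

Lemma rv_e (i : 'I_(\dim N)) : rv (vbasis N)`_i = delta_mx 0 i.
Proof.
apply/rowP => j; rewrite !mxE coord_free ?basis_free ?vbasisP //.
  by rewrite eqxx /= eq_sym.
exact: basis_free (vbasisP N).
Qed.

Lemma mx_ext (A B : 'M[k]_(\dim N)) : (forall v, v \in N -> rv v *m A = rv v *m B) -> A = B.
Proof.
move=> H; apply/row_matrixP => i; rewrite !rowE -rv_e; apply: H.
exact: vbasis_in.
Qed.

Lemma rvB u v : rv (u - v) = rv u - rv v.
Proof. by apply/rowP => j; rewrite !mxE linearB. Qed.
Lemma rv0 : rv 0 = 0.
Proof. by apply/rowP => j; rewrite !mxE linear0. Qed.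

Lemma rv_inj v : v \in N -> rv v = 0 -> v = 0.
Proof.
move=> Hv H0; rewrite (coord_vbasis Hv) big1 // => i _.
have := congr1 (fun r : 'rV_(\dim N) => r 0 i) H0; rewrite !mxE => ->.
by rewrite scale0r.
Qed.

Lemma rv_surj (w : 'rV[k]_(\dim N)) : exists2 v, v \in N & rv v = w.
Proof.
exists (\sum_i w 0 i *: (vbasis N)`_i).
  by apply: memv_suml => i _; apply: memvZ; apply: vbasis_in.
apply/rowP => j; rewrite mxE coord_sum_free //; exact: basis_free (vbasisP N).
Qed.

Lemma jac y a : br a (br y a) \in N -> br y a \in N.
Proof.
set b := br y a => Hab.
apply: contraT => Hb.
have HQ : mx b = mx a *m mx y - mx y *m mx a.
  apply: mx_ext => v Hv; rewrite mulmxBr !mulmxA.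
  rewrite -(rv_mx a Hv) -(rv_mx y Hv) -(rv_mx y (hNid a Hv)) -(rv_mx a (hNid y Hv)).
  rewrite -rvB -rv_mx //; congr rv.
  by rewrite /b (jacobi y a v) addrK.
have HPQ : mx a *m mx b = mx b *m mx a.
  apply: mx_ext => v Hv; rewrite !mulmxA.
  rewrite -(rv_mx a Hv) -(rv_mx b Hv) -(rv_mx b (hNid a Hv)) -(rv_mx a (hNid b Hv)).
  congr rv.
  by rewrite (jacobi a b v) (hNab Hab Hv) add0r.
have /eqP/det0P [w wn0 wQ] := @weyl_det' _ _ _ _ _ hdim HQ HPQ hchar.
have [v Hv rvw] := rv_surj w.
have bv0 : br b v = 0 by apply: rv_inj; [exact: hNid | rewrite rv_mx // rvw].
have vn0 : v != 0 by apply: contraNneq wn0 => v0; rewrite -rvw v0 rv0.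
by rewrite (hself Hv vn0 bv0) in Hb.
Qed.

End Jac.
End Lie.

Lemma char0_of (R : realType) (p : nat) (k : fieldType) (abs : k -> R) :
  finite_ext_Qp p abs -> forall m, (0 < m)%N -> m%:R != 0 :> k.
Proof.
case=> pp [_ habs0 _ _] hq _ _ m m0.
apply/eqP => hm.
have := hq m%:R; rewrite ratr_nat hm (proj2 (habs0 0) erefl) /padic_abs.
rewrite pnatr_eq0 (negPf (lt0n_neq0 m0)) => /eqP; apply/negP; rewrite eq_sym.
apply: lt0r_neq0; apply: divr_gt0; apply: exprn_gt0; rewrite ltr0n; exact: prime_gt0.
Qed.

Lemma last_nonzero (k : fieldType) (L : vectType k) (br : L -> L -> L) m :
  derived_series br m = 0%VS -> derived_series br 0 != 0%VS ->
  exists j, derived_series br j != 0%VS /\ derived_series br j.+1 = 0%VS.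
Proof.
elim: m => [|m IH] hm h0; first by rewrite hm eqxx in h0.
have [Dm0|Dmn0] := eqVneq (derived_series br m) 0%VS.
  exact: IH.
by exists m.
Qed.

Unset Implicit Arguments.

Theorem proposition2p3 (R : realType) (p : nat) (k : fieldType) (abs : k -> R)
    (hk : finite_ext_Qp p abs)
    (L : vectType k) (br : L -> L -> L)
    (hL : lie_bracket br) (hsolv : lie_solvable br) (hCA : lie_CA br) :
  lie_abelian br \/
  (lie_metabelian br /\
   exists C N : {vspace L}, semidirect_CN br C N).
Proof.
have hchar := char0_of hk.
case: (classic (lie_abelian br)) => [hab|hnab]; [by left | right].
have [x1 [y1 hxy1]] : exists x y, br x y != 0.
  apply: NNPP => H; apply: hnab => x y; apply/eqP; apply: NNPP => H'.
  by apply: H; exists x, y; apply/negP.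
pose D := derived_series br.
have [m Dm] := hsolv.
have D0 : D 0%N != 0%VS.
  apply: contraNneq hxy1 => /= f0.
  have : x1 \in (fullv : {vspace L}) by apply: memvf.
  by rewrite [fullv]f0 memv0 => /eqP ->; rewrite brl0.
have [j [Djn0 Dj1]] := @last_nonzero _ _ _ m Dm D0.
pose a0 := vpick (D j).
have a0n0 : a0 != 0 by rewrite vpick0.
have a0D : a0 \in D j by apply: memv_pick.
have Aab u v : u \in D j -> v \in D j -> br u v = 0.
  move=> hu hv; have := mem_brv hL hu hv.
  by rewrite -/(derived_series br j.+1) Dj1 memv0 => /eqP.
pose N := lker (linfun (adr hL a0)).
have memN x : (x \in N) = (br x a0 == 0) by rewrite memv_ker lfunE.
have a0N : a0 \in N by rewrite memN brxx.
have N1 u : u \in N -> br a0 u = 0.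
  by rewrite memN => /eqP h; rewrite br_anti // h oppr0.
have hNab u v : u \in N -> v \in N -> br u v = 0.
  by move=> hu hv; apply: (hCA a0 a0n0); apply: N1.
have hself x v : v \in N -> v != 0 -> br x v = 0 -> x \in N.
  move=> hv vn0 hxv; rewrite memN; apply/eqP; apply: (hCA v vn0).
    by rewrite br_anti // hxv oppr0.
  by apply/eqP; rewrite -memN.
have commA u a : u \in N -> a \in D j -> br u a = 0.
  by move=> hu ha; apply: (hCA a0 a0n0); [apply: N1 | apply: Aab].
have hNid x v : v \in N -> br x v \in N.
  move=> hv; rewrite memN; apply/eqP.
  have := jacobi hL x v a0.
  have -> : br v a0 = 0 by apply/eqP; rewrite -memN.
  have hb : br x a0 \in D j by apply: derived_ideal.
  by rewrite brr0 // (commA v _ hv hb) addr0 => <-.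
have hdim : (0 < \dim N)%N.
  rewrite lt0n dimv_eq0; apply: contraNneq a0n0 => N0.
  by move: a0N; rewrite N0 memv0.
have Dzero t : D (m + t)%N = 0%VS.
  elim: t => [|t IH]; first by rewrite addn0.
  rewrite addnS; change (lie_brv br (D (m + t)%N) (D (m + t)%N) = 0%VS).
  rewrite IH; apply/eqP; rewrite -subv0.
  apply: brv_sub => i i'.
  have e : (vbasis (0%VS : {vspace L}))`_i = 0.
    by apply/eqP; rewrite -memv0; exact: vbasis_in.
  by rewrite e brl0 // mem0v.
have down d : forall i, (0 < i)%N -> (m <= i + d)%N -> (D i <= N)%VS.
  elim: d => [|d IH] i i0 hi.
    rewrite addn0 in hi; rewrite -(subnKC hi) Dzero; exact: sub0v.
  have HD1 : (D i.+1 <= N)%VS by apply: IH => //; rewrite addSnnS.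
  have Ha a y : a \in D i -> br y a \in N.
    move=> ha; apply: (jac hL hNab hNid hself hdim (hchar _ hdim)).
    apply: (subvP HD1); apply: mem_brv => //; exact: derived_ideal.
  case: i i0 hi HD1 Ha => // i _ _ _ Ha.
  apply: brv_sub => u v.
  apply: (jac hL hNab hNid hself hdim (hchar _ hdim)).
  by apply: Ha; apply: (mem_brv hL); apply: vbasis_in.
have D1N : (D 1%N <= N)%VS.
  apply: (down m) => //; exact: leq_addl.
have LL u v : br u v \in N.
  by apply: (subvP D1N); apply: (mem_brv hL); apply: memvf.
split.
  move=> x y hx hy; apply: hNab; exact: (subvP D1N).
have [x0 x0N] : exists x0, x0 \notin N.
  case: (boolP (x1 \in N)) => hx1; last by exists x1.
  case: (boolP (y1 \in N)) => hy1; last by exists y1.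
  by rewrite (hNab _ _ hx1 hy1) eqxx in hxy1.
have x0n0 : x0 != 0 by apply: contraNneq x0N => ->; apply: mem0v.
pose C := lker (linfun (adr hL x0)).
have memC x : (x \in C) = (br x x0 == 0) by rewrite memv_ker lfunE.
have Cab u v : u \in C -> v \in C -> br u v = 0.
  move=> hu hv; apply: (hCA x0 x0n0).
    by move: hu; rewrite memC => /eqP h; rewrite br_anti // h oppr0.
  by move: hv; rewrite memC => /eqP h; rewrite br_anti // h oppr0.
have CN0 : (C :&: N = 0)%VS.
  apply/eqP; rewrite -subv0; apply/subvP => c; rewrite memv_cap memv0.
  case/andP => hc hn; apply/negPn/negP => cn0.
  have hx : br x0 c = 0.
    by move: hc; rewrite memC => /eqP h; rewrite br_anti // h oppr0.
  by rewrite (hself x0 c hn cn0 hx) in x0N.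
have dimC : (\dim C + \dim N >= \dim (fullv : {vspace L}))%N.
  have := limg_ker_dim (linfun (adr hL x0)) fullv; rewrite capfv -/C => <-.
  rewrite leq_add2l; apply: dimvS; apply/subvP => w /memv_imgP [u _ ->].
  by rewrite lfunE /= LL.
have CNf : (C + N)%VS = fullv.
  apply/eqP; rewrite eqEdim subvf dimv_disjoint_sum //.
have dimN : (\dim (fullv : {vspace L}) <= \dim N + \dim N)%N.
  have := limg_ker_dim (linfun (adr hL a0)) fullv; rewrite capfv -/N => <-.
  rewrite leq_add2l; apply: dimvS; apply/subvP => w /memv_imgP [u _ ->].
  by rewrite lfunE /= hNid.
have dimCN : (\dim C + \dim N = \dim (fullv : {vspace L}))%N.
  by rewrite -dimv_disjoint_sum // CNf.
exists C, N; split; split => //.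
- by move=> x y hx hy; rewrite Cab // mem0v.
- lia.
- move=> c n hc hn hcn.
  have [->|cn0] := eqVneq c 0; first by left.
  have [->|nn0] := eqVneq n 0; first by right.
  exfalso; have : c \in (C :&: N)%VS by rewrite memv_cap hc (hself _ _ hn nn0 hcn).
  by rewrite CN0 memv0 (negPf cn0).
Qed.
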